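(* There exist constants $A_1,A_2$ depending only on $l$ such that for all $0<\eta<\xi$: $$\int_\eta^\xi V_1(z;\xi,\eta)\,z^{l-\frac12}\,dz\le A_1(\xi-\eta)^l\left(\sqrt\xi-\sqrt\eta\right)\qquad(l\ge-\tfrac12),$$ and $$\int_0^\eta V_2(z;\xi,\eta)\,z^{l-\frac12}\,dz\le\begin{cases}A_2(\xi-\eta)^l\left(\sqrt\xi-\sqrt\eta\right),& l>0,\\[2pt] A_2(\xi-\eta)^{l+\frac12}\left(1-\frac\eta\xi\right)^{l+\frac12},&-\tfrac12\le l<0.\end{cases}$$
   Context: Let ${}_2F_1$ denote the Gauss hypergeometric function (analytically continued to $(-\infty,0)$). For $0<\eta<z<\xi$ put $\sigma_1=\frac{(z-\xi)\eta}{(z-\eta)\xi}$ and $V_1(z;\xi,\eta)=\frac{(z-\eta)^l\xi^l}{z^{2l}}\left|{}_2F_1(-l,-l;1;\sigma_1)\right|$. For $0<z<\eta<\xi$ put $\sigma_2=-\frac{z(\xi-\eta)}{\xi(\eta-z)}$ and $V_2(z;\xi,\eta)=\frac{|\sin(\pi l)|\Gamma^2(1+l)}{\pi\Gamma(2+2l)}\frac{(\xi-\eta)^{1+2l}z}{\xi^{l+1}(\eta-z)^{l+1}}\left|{}_2F_1(1+l,1+l;2+2l;\sigma_2)\right|$. *)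

(* Defs.v *)
From Stdlib Require Import Arith Reals Lra ClassicalEpsilon.
Open Scope R_scope.

Definition Rlim (u : nat -> R) : R :=
  epsilon (inhabits 0) (fun L => Un_cv u L).

Fixpoint poch (a : R) (n : nat) : R :=
  match n with
  | O => 1
  | S k => poch a k * (a + INR k)
  end.

Definition hyp_term (a b c y : R) (n : nat) : R :=
  poch a n * poch b n / (poch c n * INR (fact n)) * y ^ n.

Definition hyp_series (a b c y : R) : R :=
  Rlim (fun N => sum_f_R0 (hyp_term a b c y) N).

(* 2F1(a,b;c;x), analytically continued to x < 0 via the Pfaff
   transformation 2F1(a,b;c;x) = (1-x)^(-a) 2F1(a,c-b;c;x/(x-1)),
   where x/(x-1) lies in (0,1). *)
Definition hyp2F1 (a b c x : R) : R :=
  if Rlt_dec x 0 then Rpower (1 - x) (- a) * hyp_series a (c - b) c (x / (x - 1))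
  else hyp_series a b c x.

(* Euler's Gamma function via the Gauss limit formula
   Gamma(s) = lim n! n^s / (s (s+1) ... (s+n)), used here for s > 0. *)
Definition Gamma (s : R) : R :=
  Rlim (fun n => INR (fact n) * Rpower (INR n) s / poch s (S n)).

Definition sigma1 (z xi eta : R) : R := (z - xi) * eta / ((z - eta) * xi).

Definition V1 (l z xi eta : R) : R :=
  Rpower (z - eta) l * Rpower xi l / Rpower z (2 * l)
  * Rabs (hyp2F1 (- l) (- l) 1 (sigma1 z xi eta)).

Definition sigma2 (z xi eta : R) : R := - (z * (xi - eta) / (xi * (eta - z))).

Definition V2 (l z xi eta : R) : R :=
  Rabs (sin (PI * l)) * (Gamma (1 + l)) ^ 2 / (PI * Gamma (2 + 2 * l))
  * (Rpower (xi - eta) (1 + 2 * l) * z / (Rpower xi (l + 1) * Rpower (eta - z) (l + 1)))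
  * Rabs (hyp2F1 (1 + l) (1 + l) (2 + 2 * l) (sigma2 z xi eta)).

(* "The (possibly improper) integral over (a,b) of a function f >= 0 is <= M":
   for nonnegative integrands this means every integral over a compact
   subinterval [c,d] of (a,b) exists (Riemann) and is <= M. *)
Definition improper_int_le (f : R -> R) (a b M : R) : Prop :=
  forall c d, a < c -> c <= d -> d < b ->
    exists pr : Riemann_integrable f c d, RiemannInt pr <= M.

(* Main.v *)
Require Import Defs.
From Stdlib Require Import Reals Lra Lia ZArith ClassicalEpsilon.
From Coquelicot Require Import Coquelicot.
Open Scope R_scope.

Lemma Rlim_eq u L : Un_cv u L -> Rlim u = L.
Proof.
  intros H. unfold Rlim.
  assert (E: exists L, Un_cv u L) by eauto.
  pose proof (epsilon_spec (inhabits 0) (fun L => Un_cv u L) E) as H2.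
  simpl in H2. eapply UL_sequence; eauto.
Qed.

Definition tco a b c n := poch a n * poch b n / (poch c n * INR (Factorial.fact n)).

Lemma tco0 a b c : tco a b c 0 = 1.
Proof. unfold tco; simpl; field. Qed.

Lemma geom_bound (y : R) : 0 <= y < 1 -> forall N,
  sum_f_R0 (fun i => (y^2)^i) N <= / (1 - y^2).
Proof.
  intros Hy N. rewrite tech3 by nra. unfold Rdiv.
  rewrite <- (Rmult_1_l (/ (1 - y^2))) at 2.
  apply Rmult_le_compat_r. apply Rlt_le, Rinv_0_lt_compat; nra.
  assert (0 <= (y^2)^(S N)) by (apply pow_le; nra). lra.
Qed.

Lemma amgm_term (C s p q : R) : 0 <= C -> 0 < s -> 0 <= p -> 0 < q ->
  C * q * p <= C * s / 2 * p^2 + C / s * (q^2 / 2).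
Proof.
  intros HC Hs Hp Hq.
  assert (H: q * p <= s / 2 * p^2 + / s * (q^2 / 2)).
  { assert (H: 0 <= (s*p - q)^2) by apply pow2_ge_0.
    apply Rmult_le_reg_l with (2*s). lra.
    replace (2 * s * (s / 2 * p ^ 2 + / s * (q ^ 2 / 2))) with (s*s*p^2 + q^2) by (field; lra).
    replace ((s*p-q)^2) with (s*s*p^2 + q^2 - 2*s*(q*p)) in H by ring. lra. }
  replace (C / s * (q^2/2)) with (C * (/ s * (q^2/2))) by (field; lra).
  replace (C * s / 2 * p^2) with (C * (s / 2 * p^2)) by field.
  rewrite Rmult_assoc, <- Rmult_plus_distr_l. apply Rmult_le_compat_l; lra.
Qed.

Lemma partial_bound (t : nat -> R) (C y : R) :
  0 <= C -> t 0%nat = 1 ->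
  (forall n, (1 <= n)%nat -> INR n * Rabs (t n) <= C) ->
  0 <= y < 1 -> forall N,
  sum_f_R0 (fun n => Rabs (t n * y^n)) N <=
    1 + C * sqrt (1-y) / 2 * sum_f_R0 (fun i => (y^2)^i) N
      + C / sqrt (1-y) * (1 - / (INR N + 1)).
Proof.
  intros HC H0 Ht Hy.
  assert (Hs: 0 < sqrt (1-y)) by (apply sqrt_lt_R0; lra).
  set (s := sqrt (1-y)) in *.
  induction N as [|N IH].
  - simpl. rewrite H0. rewrite Rmult_1_r, Rabs_R1.
    replace (1 - / (0+1)) with 0 by (field). 
    assert (0 <= C * s) by (apply Rmult_le_pos; lra).
    lra.
  - rewrite !tech5.
    assert (Hn := Ht (S N) ltac:(lia)).
    rewrite S_INR in *.
    assert (HN: 0 <= INR N) by apply pos_INR.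
    assert (Hyp: 0 <= y ^ S N) by (apply pow_le; lra).
    assert (Ht2: Rabs (t (S N)) <= C * / (INR N + 1)).
    { apply Rmult_le_reg_l with (INR N + 1). lra.
      replace ((INR N + 1) * (C * / (INR N + 1))) with C by (field; lra). lra. }
    assert (Hterm: Rabs (t (S N) * y ^ S N) <= C * s / 2 * (y^2)^(S N)
               + C / s * (/ (INR N + 1) - / (INR N + 1 + 1))).
    { rewrite Rabs_mult, (Rabs_right (y^S N)) by lra.
      eapply Rle_trans. apply Rmult_le_compat_r. lra. exact Ht2.
      rewrite <- pow_mult, Nat.mul_comm, pow_mult.
      eapply Rle_trans. apply (amgm_term C s (y ^ S N) (/ (INR N + 1))); try lra.
      apply Rinv_0_lt_compat; lra.
      apply Rplus_le_compat_l. apply Rmult_le_compat_l.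
      apply Rmult_le_pos; [lra| apply Rlt_le, Rinv_0_lt_compat; lra].
      replace (/ (INR N + 1) - / (INR N + 1 + 1)) with (/ ((INR N + 1) * (INR N + 2))) by (field; lra).
      replace ((/ (INR N + 1)) ^ 2 / 2) with (/ ((INR N + 1) * (INR N + 1) * 2)) by (field; lra).
      apply Rinv_le_contravar. apply Rmult_lt_0_compat; lra. nra. }
    set (G := sum_f_R0 (fun i : nat => (y ^ 2) ^ i) N) in *.
    set (A := Rabs (t (S N) * y ^ S N)) in *.
    set (u := / (INR N + 1)) in *. set (v := / (INR N + 1 + 1)) in *.
    set (K1 := C * s / 2) in *. set (K2 := C / s) in *.
    set (S0 := sum_f_R0 (fun n : nat => Rabs (t n * y ^ n)) N) in *.
    set (w := (y ^ 2) ^ S N) in *.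
    replace (K1 * (G + w)) with (K1 * G + K1 * w) by ring.
    replace (K2 * (1 - v)) with (K2 * (1 - u) + K2 * (u - v)) by ring.
    lra.
Qed.

Section HM.
Variables a b c C : R.
Hypothesis HC : 0 <= C.
Hypothesis Hco : forall n, (1 <= n)%nat -> INR n * Rabs (tco a b c n) <= C.

Lemma tco_bd n : Rabs (tco a b c n) <= 1 + C.
Proof.
  destruct n. rewrite tco0, Rabs_R1. lra.
  pose proof (Hco (S n) ltac:(lia)). rewrite S_INR in H.
  assert (0 <= INR n) by apply pos_INR.
  pose proof (Rabs_pos (tco a b c (S n))). nra.
Qed.

Lemma radius_ge1 : Rbar_le 1 (CV_radius (tco a b c)).
Proof.
  destruct (CV_radius_bounded (tco a b c)) as [Hub _].
  apply Hub. exists (1 + C). intros n. rewrite pow1, Rmult_1_r. apply tco_bd.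
Qed.

Lemma inside y : Rabs y < 1 -> Rbar_lt (Rabs y) (CV_radius (tco a b c)).
Proof.
  intros Hy. pose proof radius_ge1.
  destruct (CV_radius (tco a b c)); simpl in *; lra || auto.
Qed.

Lemma hyp_eq y : Rabs y < 1 -> hyp_series a b c y = PSeries (tco a b c) y.
Proof.
  intros Hy. pose proof (CV_disk_inside _ _ (inside y Hy)) as Hd.
  apply ex_series_Rabs in Hd.
  apply Series_correct in Hd. apply is_series_Reals in Hd.
  unfold hyp_series. apply Rlim_eq. exact Hd.
Qed.

Lemma hyp_cont y : Rabs y < 1 -> continuity_pt (PSeries (tco a b c)) y.
Proof. intros Hy. apply PSeries_continuity, inside, Hy. Qed.

Lemma hyp_bound y : 0 <= y < 1 ->
  Rabs (PSeries (tco a b c) y) <= (1 + 2*C) / sqrt (1 - y).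
Proof.
  intros Hy.
  assert (Hy' : Rabs y < 1) by (rewrite Rabs_right; lra).
  pose proof (CV_disk_inside _ _ (inside y Hy')) as Hd.
  apply ex_series_Rabs in Hd.
  apply Series_correct in Hd. apply is_series_Reals in Hd.
  unfold PSeries. set (L := Series _) in *.
  assert (Hs: 0 < sqrt (1-y)) by (apply sqrt_lt_R0; lra).
  assert (Hss: sqrt (1-y) * sqrt (1-y) = 1 - y) by (apply sqrt_sqrt; lra).
  set (s := sqrt (1-y)) in *.
  assert (Hs1 : s <= 1) by nra.
  set (B := (1 + 2*C)/s).
  assert (HB: forall N, Rabs (sum_f_R0 (fun k => tco a b c k * y^k) N) <= B).
  { intros N. eapply Rle_trans. apply sum_f_R0_triangle.
    eapply Rle_trans. apply (partial_bound (tco a b c) C y HC (tco0 a b c) Hco Hy N).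
    fold s.
    pose proof (geom_bound y Hy N) as Hg.
    assert (HN: 0 < / (INR N + 1)) by (apply Rinv_0_lt_compat; pose proof (pos_INR N); lra).
    assert (H1: C * s / 2 * sum_f_R0 (fun i => (y^2)^i) N <= C / (2*s)).
    { apply Rle_trans with (C * s / 2 * / (1 - y^2)).
      apply Rmult_le_compat_l. apply Rmult_le_pos; [apply Rmult_le_pos|]; lra. exact Hg.
      assert (0 < 1 - y^2) by nra.
      apply Rmult_le_reg_l with (2 * s * (1 - y^2)). apply Rmult_lt_0_compat; lra.
      replace (2 * s * (1 - y ^ 2) * (C * s / 2 * / (1 - y ^ 2))) with (C * (s*s)) by (field; nra).
      replace (2 * s * (1 - y ^ 2) * (C / (2 * s))) with (C * (1-y^2)) by (field; lra).
      apply Rmult_le_compat_l; nra. }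
    assert (H2: C / s * (1 - / (INR N + 1)) <= C / s).
    { assert (0 <= C / s) by (unfold Rdiv; apply Rmult_le_pos; [lra|apply Rlt_le, Rinv_0_lt_compat; lra]).
      nra. }
    assert (H3: 1 <= 1 / s).
    { apply Rmult_le_reg_l with s. lra. replace (s * (1/s)) with 1 by (field; lra). lra. }
    unfold B. replace ((1 + 2*C)/s) with (1/s + C/(2*s) + C/s + C/(2*s) ) by (field; lra).
    assert (0 <= C/(2*s)) by (unfold Rdiv; apply Rmult_le_pos; [lra|apply Rlt_le, Rinv_0_lt_compat; lra]).
    lra. }
  destruct (Rle_or_lt (Rabs L) B) as [Hle|Hlt]; auto.
  exfalso. destruct (Hd (Rabs L - B) ltac:(lra)) as [N HN].
  specialize (HN N (le_n N)). specialize (HB N). unfold R_dist in HN.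
  pose proof (Rabs_triang_inv L (sum_f_R0 (fun k => tco a b c k * y^k) N)).
  rewrite Rabs_minus_sym in HN. lra.
Qed.
End HM.

Lemma finite_max (v : nat -> R) N : exists M, 0 <= M /\ forall n, (n <= N)%nat -> v n <= M.
Proof.
  induction N as [|N [M [HM IH]]].
  - exists (Rmax 0 (v 0%nat)). split. apply Rmax_l. intros n Hn. replace n with 0%nat by lia. apply Rmax_r.
  - exists (Rmax M (v (S N))). split. eapply Rle_trans; [exact HM| apply Rmax_l].
    intros n Hn. destruct (Nat.eq_dec n (S N)). subst. apply Rmax_r.
    eapply Rle_trans. apply IH. lia. apply Rmax_l.
Qed.

Lemma ratio_gen (v : nat -> R) K N : (1 <= N)%nat -> K < INR N -> 0 <= K ->
  (forall n, 0 <= v n) ->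
  (forall n, (N <= n)%nat -> v (S n) <= (1 + K / (INR n * (INR n + 1))) * v n) ->
  exists C, 0 <= C /\ forall n, (1 <= n)%nat -> v n <= C.
Proof.
  intros HN HKN HK Hv Hr.
  assert (HNp : 0 < INR N) by lra.
  assert (Hmain : forall k, v (N + k)%nat / (1 - K / INR (N + k)) <= v N / (1 - K / INR N)).
  { induction k as [|k IH]. rewrite Nat.add_0_r. lra.
    eapply Rle_trans; [|exact IH].
    rewrite Nat.add_succ_r. set (m := (N + k)%nat) in *.
    assert (Hm : INR N <= INR m) by (apply le_INR; lia).
    rewrite S_INR.
    set (x := INR m) in *.
    assert (Hx : 0 < x) by lra.
    assert (Hd1 : 0 < 1 - K / x).
    { apply Rlt_Rminus. apply Rmult_lt_reg_r with x. lra. unfold Rdiv. rewrite Rmult_assoc, Rinv_l by lra. lra. }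
    assert (Hd2 : 0 < 1 - K / (x+1)).
    { apply Rlt_Rminus. apply Rmult_lt_reg_r with (x+1). lra. unfold Rdiv. rewrite Rmult_assoc, Rinv_l by lra. lra. }
    specialize (Hr m ltac:(unfold m; lia)). fold x in Hr.
    assert (Hvm := Hv m).
    assert (Hq : (1 + K / (x * (x + 1))) / (1 - K / (x+1)) <= 1 / (1 - K / x)).
    { replace ((1 + K / (x * (x + 1))) / (1 - K / (x+1))) with ((x*(x+1) + K) / (x * (x + 1 - K))) by (field; repeat split; lra).
      replace (1 / (1 - K / x)) with (x / (x - K)) by (field; split; lra).
      apply Rmult_le_reg_r with (x * (x+1-K) * (x - K)). apply Rmult_lt_0_compat; [apply Rmult_lt_0_compat|]; lra.
      replace ((x * (x + 1) + K) / (x * (x + 1 - K)) * (x * (x + 1 - K) * (x - K))) with ((x*(x+1)+K)*(x-K)) by (field; split; lra).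
      replace (x / (x - K) * (x * (x + 1 - K) * (x - K))) with (x * (x * (x+1-K))) by (field; lra).
      nra. }
    unfold Rdiv at 1. apply Rle_trans with ((1 + K / (x * (x + 1))) * v m * / (1 - K / (x + 1))).
    apply Rmult_le_compat_r. apply Rlt_le, Rinv_0_lt_compat; lra. exact Hr.
    replace ((1 + K / (x * (x + 1))) * v m * / (1 - K / (x + 1))) with (v m * ((1 + K / (x * (x + 1))) / (1 - K / (x + 1)))) by (field; lra).
    replace (v m / (1 - K / x)) with (v m * (1 / (1 - K / x))) by (field; lra).
    apply Rmult_le_compat_l; auto. }
  destruct (finite_max v N) as [M [HM HMv]].
  assert (HdN : 0 < 1 - K / INR N).
  { apply Rlt_Rminus. apply Rmult_lt_reg_r with (INR N). lra. unfold Rdiv. rewrite Rmult_assoc, Rinv_l by lra. lra. }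
  exists (Rmax M (v N / (1 - K / INR N))). split. eapply Rle_trans; [exact HM|apply Rmax_l].
  intros n Hn. destruct (Compare_dec.le_lt_dec n N). eapply Rle_trans; [apply HMv; auto| apply Rmax_l].
  eapply Rle_trans; [|apply Rmax_r]. replace n with (N + (n - N))%nat by lia.
  set (k := (n - N)%nat). eapply Rle_trans; [|apply (Hmain k)].
  assert (Hm : INR N <= INR (N + k)) by (apply le_INR; lia).
  set (x := INR (N+k)) in *.
  assert (Hd1 : 0 < 1 - K / x).
  { apply Rlt_Rminus. apply Rmult_lt_reg_r with x. lra. unfold Rdiv. rewrite Rmult_assoc, Rinv_l by lra. lra. }
  assert (Hle : 1 - K / x <= 1).
  { assert (0 <= K / x) by (unfold Rdiv; apply Rmult_le_pos; [lra| apply Rlt_le, Rinv_0_lt_compat; lra]). lra. }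
  pose proof (Hv (N+k)%nat).
  apply Rmult_le_reg_r with (1 - K/x). lra.
  replace (v (N + k)%nat / (1 - K / x) * (1 - K / x)) with (v (N+k)%nat) by (field; lra).
  nra.
Qed.

Lemma poch_S a n : poch a (S n) = poch a n * (a + INR n).
Proof. reflexivity. Qed.

Lemma poch_pos c n : 0 < c -> 0 < poch c n.
Proof.
  intros Hc. induction n. simpl; lra. rewrite poch_S. apply Rmult_lt_0_compat; auto.
  pose proof (pos_INR n); lra.
Qed.

Lemma tco_S a b c n : 0 < c ->
  tco a b c (S n) = tco a b c n * ((a + INR n) * (b + INR n) / ((c + INR n) * (INR n + 1))).
Proof.
  intros Hc. unfold tco. rewrite !poch_S.
  assert (0 < poch c n) by (apply poch_pos; auto).
  assert (0 < INR (Factorial.fact n)) by (apply lt_0_INR, Factorial.lt_O_fact).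
  assert (0 <= INR n) by apply pos_INR.
  replace (Factorial.fact (S n)) with ((S n) * Factorial.fact n)%nat by reflexivity.
  rewrite mult_INR, S_INR. field. repeat split; lra.
Qed.

Lemma coef_from_ratio a b c K N : 0 < c -> (1 <= N)%nat -> K < INR N -> 0 <= K ->
  (forall n, (N <= n)%nat -> Rabs ((a + INR n) * (b + INR n)) <= (INR n * (c + INR n)) * (1 + K / (INR n * (INR n + 1)))) ->
  exists C, 0 <= C /\ forall n, (1 <= n)%nat -> INR n * Rabs (tco a b c n) <= C.
Proof.
  intros Hc HN HKN HK Hr.
  apply (ratio_gen (fun n => INR n * Rabs (tco a b c n)) K N); auto.
  intros n. apply Rmult_le_pos. apply pos_INR. apply Rabs_pos.
  intros n Hn. cbv beta.
  assert (Hn1 : 1 <= INR n) by (apply (le_INR 1); lia).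
  rewrite tco_S by auto. rewrite S_INR. rewrite Rabs_mult.
  specialize (Hr n Hn).
  set (x := INR n) in *. set (T := Rabs (tco a b c n)).
  assert (0 <= T) by apply Rabs_pos.
  unfold Rdiv at 1. rewrite Rabs_mult, Rabs_inv. rewrite (Rabs_right ((c + x) * (x + 1))) by (apply Rle_ge, Rmult_le_pos; lra).
  set (P := Rabs ((a + x) * (b + x))) in *.
  replace ((x + 1) * (T * (P * / ((c + x) * (x + 1))))) with (T * P / (c+x)) by (field; lra).
  replace ((1 + K / (x * (x + 1))) * (x * T)) with (T * ((x * (c + x)) * (1 + K / (x * (x + 1)))) / (c+x)) by (field; lra).
  unfold Rdiv. apply Rmult_le_compat_r. apply Rlt_le, Rinv_0_lt_compat; lra.
  apply Rmult_le_compat_l; auto.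
Qed.

Lemma nat_big (X : R) : exists N : nat, (1 <= N)%nat /\ X < INR N.
Proof.
  destruct (archimed (Rabs X)) as [H1 H2].
  exists (S (Z.to_nat (up (Rabs X)))). split. auto with arith.
  rewrite S_INR, INR_IZR_INZ, Z2Nat.id.
  pose proof (Rle_abs X). lra.
  apply le_IZR. pose proof (Rabs_pos X). lra.
Qed.

Lemma coefV1 l : -1/2 <= l ->
  exists C, 0 <= C /\ forall n, (1 <= n)%nat -> INR n * Rabs (tco (-l) (1 - - l) 1 n) <= C.
Proof.
  intros Hl. set (K := Rabs (l * (l+1))).
  destruct (nat_big (K + Rabs l + 1)) as [N [HN HNb]].
  assert (HK : 0 <= K) by apply Rabs_pos.
  pose proof (Rabs_pos l).
  apply (coef_from_ratio _ _ _ K N); try lra; auto.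
  intros n Hn. assert (Hx : INR N <= INR n) by (apply le_INR; lia).
  set (x := INR n) in *.
  assert (Hl1 : l <= Rabs l) by apply Rle_abs.
  assert (Hl2 : -l <= Rabs l) by (rewrite <- Rabs_Ropp; apply Rle_abs).
  rewrite Rabs_right by (apply Rle_ge, Rmult_le_pos; lra).
  replace (x * (1 + x) * (1 + K / (x * (x + 1)))) with (x*(x+1) + K) by (field; lra).
  assert (HK1 : l*(l+1) <= K) by apply Rle_abs.
  assert (HK2 : -(l*(l+1)) <= K) by (unfold K; rewrite <- Rabs_Ropp; apply Rle_abs).
  nra.
Qed.

Lemma coefV2 l : -1/2 <= l ->
  exists C, 0 <= C /\ forall n, (1 <= n)%nat ->
    INR n * Rabs (tco (1 + l) (2 + 2 * l - (1 + l)) (2 + 2 * l) n) <= C.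
Proof.
  intros Hl. set (K := (1+l)^2).
  destruct (nat_big K) as [N [HN HNb]].
  assert (HK : 0 <= K) by (apply pow2_ge_0).
  apply (coef_from_ratio _ _ _ K N); try lra; auto.
  intros n Hn. assert (Hx : 1 <= INR n) by (apply (le_INR 1); lia).
  set (x := INR n) in *.
  replace (2 + 2 * l - (1 + l) + x) with (1 + l + x) by ring.
  rewrite Rabs_right by (apply Rle_ge, Rmult_le_pos; lra).
  replace (x * (2 + 2 * l + x) * (1 + K / (x * (x + 1)))) with (x * (2+2*l+x) + K * ((2+2*l+x)/(x+1))) by (field; lra).
  assert (1 <= (2+2*l+x)/(x+1)).
  { apply Rmult_le_reg_r with (x+1). lra. replace ((2 + 2 * l + x) / (x + 1) * (x + 1)) with (2+2*l+x) by (field; lra). lra. }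
  unfold K in *. nra.
Qed.

Lemma int_bound (f ft g H : R -> R) c d M : c <= d ->
  (forall x, c <= x <= d -> f x = ft x) ->
  (forall x, c <= x <= d -> continuous ft x) ->
  (forall x, c <= x <= d -> continuous g x) ->
  (forall x, c <= x <= d -> is_derive H x (g x)) ->
  (forall x, c <= x <= d -> ft x <= g x) ->
  H d - H c <= M ->
  exists pr : Riemann_integrable f c d, RiemannInt pr <= M.
Proof.
  intros Hcd Heq Hft Hg HH Hle HM.

  assert (Eft : ex_RInt ft c d).
  { apply (@ex_RInt_continuous R_CompleteNormedModule). rewrite Rmin_left, Rmax_right by lra. auto. }
  assert (Ef : ex_RInt f c d).
  { apply ex_RInt_ext with ft. rewrite Rmin_left, Rmax_right by lra. intros; symmetry; apply Heq; lra. auto. }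
  assert (Ig : is_RInt g c d (minus (H d) (H c))).
  { apply (@is_RInt_derive R_CompleteNormedModule); rewrite Rmin_left, Rmax_right by lra; auto. }
  exists (ex_RInt_Reals_0 _ _ _ Ef).
  rewrite <- RInt_Reals.
  rewrite (RInt_ext f ft). 2:{ rewrite Rmin_left, Rmax_right by lra. intros; apply Heq; lra. }
  eapply Rle_trans. apply (RInt_le ft g); auto. exists (minus (H d) (H c)); exact Ig.
  intros; apply Hle; lra.
  rewrite (is_RInt_unique _ _ _ _ Ig). exact HM.
Qed.

Lemma cont_of_pt f x : continuity_pt f x -> continuous f x.
Proof. intros H. apply continuity_pt_filterlim. exact H. Qed.

Lemma Rpower_pos x a : 0 < Rpower x a.
Proof. unfold Rpower. apply exp_pos. Qed.

Lemma Rpower_inv x a : 0 < x -> Rpower (/ x) a = / Rpower x a.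
Proof. intros. unfold Rpower. rewrite ln_Rinv by auto. rewrite <- exp_Ropp. f_equal. ring. Qed.

Lemma Rpower_div x y a : 0 < x -> 0 < y -> Rpower (x / y) a = Rpower x a / Rpower y a.
Proof.
  intros. unfold Rdiv. rewrite <- Rpower_mult_distr; auto. rewrite Rpower_inv; auto.
  apply Rinv_0_lt_compat; auto.
Qed.

Lemma Rpower_mul x y a : 0 < x -> 0 < y -> Rpower (x * y) a = Rpower x a * Rpower y a.
Proof. intros. rewrite Rpower_mult_distr; auto. Qed.

Lemma Rpower_minus_half x a : 0 < x -> Rpower x (a - 1/2) = Rpower x a / sqrt x.
Proof.
  intros. replace (a - 1/2) with (a + - (/2)) by field. rewrite Rpower_plus, Rpower_Ropp, Rpower_sqrt; auto.
Qed.

Lemma Rpower_plus_half x a : 0 < x -> Rpower x (a + 1/2) = Rpower x a * sqrt x.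
Proof.
  intros. replace (a + 1/2) with (a + (/2)) by field. rewrite Rpower_plus, Rpower_sqrt; auto.
Qed.

Lemma Rpower_neg x a : Rpower x (- a) = / Rpower x a.
Proof. apply Rpower_Ropp. Qed.

Lemma Rpower_le_base a x y : 0 <= a -> 0 < x <= y -> Rpower x a <= Rpower y a.
Proof. intros. apply Rle_Rpower_l; auto. Qed.

Lemma Rpower_le_base_neg a x y : a <= 0 -> 0 < x <= y -> Rpower y a <= Rpower x a.
Proof.
  intros. replace a with (- (-a)) by ring. rewrite (Rpower_neg y (-a)), (Rpower_neg x (-a)).
  apply Rinv_le_contravar. apply Rpower_pos. apply Rle_Rpower_l; lra.
Qed.

Lemma ln_sqrt' x : 0 < x -> ln (sqrt x) = ln x / 2.
Proof. intros. rewrite <- Rpower_sqrt by auto. rewrite ln_Rpower. field. Qed.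

Lemma le_ln a b : 0 < a -> 0 < b -> ln a <= ln b -> a <= b.
Proof.
  intros Ha Hb H. destruct H as [H|H]. left. apply ln_lt_inv; auto. right. apply ln_inv; auto.
Qed.

Lemma ln_le' x y : 0 < x -> x <= y -> ln x <= ln y.
Proof. intros Hx [H|H]. left; apply ln_increasing; auto. subst; lra. Qed.

Ltac pos := repeat (first [apply Rmult_lt_0_compat | apply Rinv_0_lt_compat | apply Rpower_pos
   | apply sqrt_lt_R0 | apply exp_pos]); try lra.

Ltac lnx := unfold Rdiv; repeat (first [rewrite ln_mult by pos | rewrite ln_Rinv by pos
   | rewrite ln_Rpower | rewrite ln_sqrt' by pos]).

Lemma cmul (f g : R -> R) x : continuous f x -> continuous g x -> continuous (fun z => f z * g z) x.
Proof. intros. apply (continuous_mult f g x); auto. Qed.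

Lemma dcont (f : R -> R) x : ex_derive f x -> continuous f x.
Proof. intros H. apply (@ex_derive_continuous R_AbsRing R_NormedModule). exact H. Qed.

Ltac side := repeat split; unfold Rminus, Rdiv in *; try lra;
  try (apply Rmult_integral_contrapositive; split; lra); try (apply Rgt_not_eq, exp_pos).

Section V1S.
Variables l xi eta : R.
Hypothesis Hl : -1/2 <= l.
Hypothesis He : 0 < eta.
Hypothesis Hex : eta < xi.

Variable C : R.
Hypothesis HC : 0 <= C.
Hypothesis Hco : forall n, (1 <= n)%nat -> INR n * Rabs (tco (-l) (1 - - l) 1 n) <= C.
Let t := tco (-l) (1 - - l) 1.
Let sg z := sigma1 z xi eta.
Let Y z := sg z / (sg z - 1).

Lemma sg_neg z : eta < z < xi -> sg z < 0.
Proof.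
  intros Hz. unfold sg, sigma1. unfold Rdiv. 
  assert (0 < / ((z - eta) * xi)) by (apply Rinv_0_lt_compat, Rmult_lt_0_compat; lra).
  assert ((z - xi) * eta < 0) by nra. nra.
Qed.

Lemma one_m_sg z : eta < z < xi -> 1 - sg z = z * (xi - eta) / ((z - eta) * xi).
Proof. intros Hz. unfold sg, sigma1. field. lra. Qed.

Lemma Y_range z : eta < z < xi -> 0 <= Y z < 1.
Proof.
  intros Hz. pose proof (sg_neg z Hz). unfold Y.
  split. replace (sg z / (sg z - 1)) with ((- sg z) / (1 - sg z)) by (field; lra).
  unfold Rdiv. apply Rmult_le_pos; [lra|]. apply Rlt_le, Rinv_0_lt_compat; lra.
  apply Rmult_lt_reg_r with (1 - sg z). lra.
  replace (sg z / (sg z - 1) * (1 - sg z)) with (- sg z) by (field; lra). lra.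
Qed.

Lemma one_m_Y z : eta < z < xi -> 1 - Y z = (z - eta) * xi / (z * (xi - eta)).
Proof.
  intros Hz. pose proof (sg_neg z Hz). pose proof (one_m_sg z Hz).
  unfold Y. replace (1 - sg z / (sg z - 1)) with (/ (1 - sg z)) by (field; lra).
  rewrite H0. field. repeat split; lra.
Qed.

Definition ft1 z := Rpower (z - eta) l * Rpower xi l / Rpower z (2 * l)
   * Rabs (Rpower (1 - sigma1 z xi eta) (- - l) *
           PSeries t (sigma1 z xi eta / (sigma1 z xi eta - 1))) * Rpower z (l - 1/2).

Lemma f_eq1 z : eta < z < xi -> V1 l z xi eta * Rpower z (l - 1/2) = ft1 z.
Proof.
  intros Hz. unfold V1, ft1, hyp2F1.
  pose proof (sg_neg z Hz) as Hs. unfold sg in Hs.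
  destruct (Rlt_dec (sigma1 z xi eta) 0) as [_|Hn]; [|lra].
  rewrite (hyp_eq _ _ _ C HC Hco). reflexivity.
  pose proof (Y_range z Hz). unfold Y, sg in H. rewrite Rabs_right; lra.
Qed.

Lemma ft1_cont z : eta < z < xi -> continuous ft1 z.
Proof.
  intros Hz. pose proof (sg_neg z Hz) as Hs. pose proof (one_m_sg z Hz) as H1.
  pose proof (Y_range z Hz) as HY. unfold sg, Y in *. unfold ft1.
  assert (Hp : 0 < 1 - sigma1 z xi eta) by lra.
  apply cmul; [apply cmul|].
  - apply dcont. unfold Rpower. auto_derive. side.
  - apply continuous_Rabs_comp. apply cmul.
    + apply dcont. unfold Rpower, sigma1 in *. auto_derive. side.
    + apply (continuous_comp (fun z => sigma1 z xi eta / (sigma1 z xi eta - 1)) (PSeries t)).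
      * apply dcont. unfold sigma1 in *. auto_derive. side.
      * apply cont_of_pt. apply (hyp_cont _ _ _ C HC Hco). unfold sg in HY; cbv beta in HY. unfold sigma1 in *. rewrite Rabs_right; lra.
  - apply dcont. unfold Rpower. auto_derive. lra.
Qed.

Definition gB1 := (1 + 2 * C) * Rpower (xi - eta) l * sqrt (xi - eta) / sqrt xi.

Lemma ft1_le z : eta < z < xi -> ft1 z <= gB1 / sqrt (z - eta).
Proof.
  intros Hz. pose proof (sg_neg z Hz) as Hs. pose proof (one_m_sg z Hz) as H1.
  pose proof (Y_range z Hz) as HY. pose proof (one_m_Y z Hz) as HY1.
  unfold Y in *. unfold sg in *. cbv beta in *. unfold ft1.
  set (y := sigma1 z xi eta / (sigma1 z xi eta - 1)) in *.
  rewrite Rabs_mult, (Rabs_right (Rpower _ _)) by (apply Rle_ge, Rlt_le, Rpower_pos).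
  rewrite Ropp_involutive.
  assert (HW : Rpower (z - eta) l * Rpower xi l / Rpower z (2 * l) * Rpower (1 - sigma1 z xi eta) l * Rpower z (l - 1/2)
           = Rpower (xi - eta) l / sqrt z).
  { rewrite H1. rewrite Rpower_div, !Rpower_mul by (try apply Rmult_lt_0_compat; lra).
    replace (2 * l) with (l + l) by ring. rewrite Rpower_plus, Rpower_minus_half by lra.
    assert (0 < sqrt z) by (apply sqrt_lt_R0; lra).
    pose proof (Rpower_pos z l). pose proof (Rpower_pos (z - eta) l). pose proof (Rpower_pos xi l).
    pose proof (Rpower_pos (xi - eta) l).
    field. repeat split; lra. }
  pose proof (hyp_bound _ _ _ C HC Hco y HY) as Hb.
  fold t in Hb.
  assert (Hsq : sqrt (1 - y) = sqrt (z - eta) * sqrt xi / (sqrt z * sqrt (xi - eta))).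
  { rewrite HY1. rewrite sqrt_div_alt by (apply Rmult_lt_0_compat; lra).
    rewrite !sqrt_mult_alt by lra. reflexivity. }
  rewrite Hsq in Hb.
  assert (0 < sqrt z) by (apply sqrt_lt_R0; lra).
  assert (0 < sqrt xi) by (apply sqrt_lt_R0; lra).
  assert (0 < sqrt (z - eta)) by (apply sqrt_lt_R0; lra).
  assert (0 < sqrt (xi - eta)) by (apply sqrt_lt_R0; lra).
  pose proof (Rpower_pos (xi - eta) l).
  set (A := Rabs (PSeries t y)) in *.
  set (P := Rpower (z - eta) l * Rpower xi l / Rpower z (2 * l)) in *.
  set (Q := Rpower z (l - 1/2)) in *.
  set (R1 := Rpower (1 - sigma1 z xi eta) l) in *.
  replace (P * (R1 * A) * Q) with ((P * R1 * Q) * A) by ring.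
  rewrite HW.
  replace ((1 + 2 * C) / (sqrt (z - eta) * sqrt xi / (sqrt z * sqrt (xi - eta)))) with
     ((1 + 2 * C) * sqrt z * sqrt (xi - eta) / (sqrt (z - eta) * sqrt xi)) in Hb by (field; lra).
  apply Rle_trans with (Rpower (xi - eta) l / sqrt z * ((1 + 2 * C) * sqrt z * sqrt (xi - eta) / (sqrt (z - eta) * sqrt xi))).
  apply Rmult_le_compat_l. unfold Rdiv; apply Rmult_le_pos; [lra|apply Rlt_le, Rinv_0_lt_compat; lra]. exact Hb.
  unfold gB1. right. field. repeat split; lra.
Qed.
End V1S.

Lemma V1_part l : -1/2 <= l -> exists A1, forall xi eta, 0 < eta -> eta < xi ->
  improper_int_le (fun z => V1 l z xi eta * Rpower z (l - 1/2)) eta xi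
    (A1 * Rpower (xi - eta) l * (sqrt xi - sqrt eta)).
Proof.
  intros Hl. destruct (coefV1 l Hl) as [C [HC Hco]].
  exists (4 * (1 + 2 * C)). intros xi eta He Hex c d Hc Hcd Hd.
  set (B := gB1 l xi eta C).
  assert (HB : 0 <= B).
  { unfold B, gB1. pose proof (Rpower_pos (xi - eta) l).
    pose proof (sqrt_lt_R0 xi ltac:(lra)). pose proof (sqrt_pos (xi - eta)).
    unfold Rdiv. apply Rmult_le_pos; [|apply Rlt_le, Rinv_0_lt_compat; lra].
    apply Rmult_le_pos; auto. apply Rmult_le_pos; lra. }
  apply (int_bound _ (ft1 l xi eta) (fun z => B / sqrt (z - eta)) (fun z => 2 * B * sqrt (z - eta))); auto.
  - intros x Hx. apply (f_eq1 l xi eta He Hex C HC Hco); lra.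
  - intros x Hx. apply (ft1_cont l xi eta He Hex C HC Hco); lra.
  - intros x Hx. apply dcont. auto_derive. split; [lra|]. split; [|auto].
    apply Rgt_not_eq, sqrt_lt_R0; lra.
  - intros x Hx. auto_derive. lra. replace (x + - eta) with (x - eta) by ring. assert (0 < sqrt (x - eta)) by (apply sqrt_lt_R0; lra). field. lra.
  - intros x Hx. apply (ft1_le l xi eta He Hex C HC Hco); lra.
  - assert (Hs1 : sqrt (d - eta) <= sqrt (xi - eta)) by (apply sqrt_le_1_alt; lra).
    pose proof (sqrt_pos (c - eta)).
    apply Rle_trans with (2 * B * sqrt (xi - eta)). nra.
    unfold B, gB1.
    assert (Hxi : 0 < sqrt xi) by (apply sqrt_lt_R0; lra).
    assert (Het : 0 < sqrt eta) by (apply sqrt_lt_R0; lra).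
    assert (Hlt : sqrt eta < sqrt xi) by (apply sqrt_lt_1_alt; lra).
    assert (Hxe : sqrt (xi - eta) * sqrt (xi - eta) = xi - eta) by (apply sqrt_sqrt; lra).
    assert (Hxx : sqrt xi * sqrt xi = xi) by (apply sqrt_sqrt; lra).
    assert (Hee : sqrt eta * sqrt eta = eta) by (apply sqrt_sqrt; lra).
    pose proof (Rpower_pos (xi - eta) l).
    set (K := 1 + 2 * C). set (Rp := Rpower (xi - eta) l).
    replace (2 * (K * Rp * sqrt (xi - eta) / sqrt xi) * sqrt (xi - eta)) with
      (2 * K * Rp * ((sqrt xi - sqrt eta) * (sqrt xi + sqrt eta)) / sqrt xi).
    2:{ assert (E : (sqrt xi - sqrt eta) * (sqrt xi + sqrt eta) = sqrt (xi - eta) * sqrt (xi - eta)) by nra.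
        rewrite E. field. lra. }
    apply Rmult_le_reg_r with (sqrt xi). lra.
    replace (2 * K * Rp * ((sqrt xi - sqrt eta) * (sqrt xi + sqrt eta)) / sqrt xi * sqrt xi)
      with (2 * K * Rp * ((sqrt xi - sqrt eta) * (sqrt xi + sqrt eta))) by (field; lra).
    assert (0 <= K * Rp) by (apply Rmult_le_pos; [unfold K; lra | unfold Rp; apply Rlt_le, Rpower_pos]).
    assert (0 <= (sqrt xi - sqrt eta)) by lra.
    assert (0 <= K * Rp * (sqrt xi - sqrt eta)) by (apply Rmult_le_pos; lra).
    nra.
Qed.

Ltac side2 := repeat split; unfold Rminus, Rdiv in *; try lra;
  try (apply Rgt_not_eq; unfold Rgt; pos; fail).

Section V2S.
Variables l xi eta : R.
Hypothesis Hl : -1/2 <= l.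
Hypothesis He : 0 < eta.
Hypothesis Hex : eta < xi.
Variable C : R.
Hypothesis HC : 0 <= C.
Hypothesis Hco : forall n, (1 <= n)%nat ->
    INR n * Rabs (tco (1 + l) (2 + 2 * l - (1 + l)) (2 + 2 * l) n) <= C.

Definition t2 := tco (1 + l) (2 + 2 * l - (1 + l)) (2 + 2 * l).
Definition Kc := Rabs (sin (PI * l)) * (Gamma (1 + l)) ^ 2 / (PI * Gamma (2 + 2 * l)).

Lemma sg2_neg z : 0 < z < eta -> sigma2 z xi eta < 0.
Proof.
  intros Hz. unfold sigma2.
  assert (0 < z * (xi - eta) / (xi * (eta - z))) by pos. lra.
Qed.

Lemma one_m_sg2 z : 0 < z < eta -> 1 - sigma2 z xi eta = eta * (xi - z) / (xi * (eta - z)).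
Proof. intros Hz. unfold sigma2. field. lra. Qed.

Lemma Y2_range z : 0 < z < eta -> 0 <= sigma2 z xi eta / (sigma2 z xi eta - 1) < 1.
Proof.
  intros Hz. pose proof (sg2_neg z Hz). set (s := sigma2 z xi eta) in *.
  split. replace (s / (s - 1)) with ((- s) / (1 - s)) by (field; lra).
  unfold Rdiv. apply Rmult_le_pos; [lra|]. apply Rlt_le, Rinv_0_lt_compat; lra.
  apply Rmult_lt_reg_r with (1 - s). lra.
  replace (s / (s - 1) * (1 - s)) with (- s) by (field; lra). lra.
Qed.

Definition ft2 z := Kc * (Rpower (xi - eta) (1 + 2 * l) * z / (Rpower xi (l + 1) * Rpower (eta - z) (l + 1)))
  * Rabs (Rpower (1 - sigma2 z xi eta) (- (1 + l)) *
          PSeries t2 (sigma2 z xi eta / (sigma2 z xi eta - 1))) * Rpower z (l - 1/2).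

Lemma f_eq2 z : 0 < z < eta -> V2 l z xi eta * Rpower z (l - 1/2) = ft2 z.
Proof.
  intros Hz. unfold V2, ft2, hyp2F1, Kc.
  pose proof (sg2_neg z Hz) as Hs.
  destruct (Rlt_dec (sigma2 z xi eta) 0) as [_|Hn]; [|lra].
  rewrite (hyp_eq _ _ _ C HC Hco). reflexivity.
  pose proof (Y2_range z Hz). rewrite Rabs_right; lra.
Qed.

Lemma ft2_cont z : 0 < z < eta -> continuous ft2 z.
Proof.
  intros Hz. pose proof (sg2_neg z Hz) as Hs.
  pose proof (Y2_range z Hz) as HY. unfold ft2.
  assert (Hp : 0 < 1 - sigma2 z xi eta) by lra.
  apply cmul; [apply cmul|].
  - apply dcont. unfold Rpower. auto_derive. side2.
  - apply continuous_Rabs_comp. apply cmul.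
    + apply dcont. unfold Rpower, sigma2 in *. auto_derive. side2.
    + apply (continuous_comp (fun z => sigma2 z xi eta / (sigma2 z xi eta - 1)) (PSeries t2)).
      * apply dcont. unfold sigma2 in *. auto_derive. side2.
      * apply cont_of_pt. apply (hyp_cont _ _ _ C HC Hco). rewrite Rabs_right; lra.
  - apply dcont. unfold Rpower. auto_derive. lra.
Qed.

Definition D0 := Rpower (xi - eta) (1 + 2 * l) * sqrt eta / (Rpower eta (1 + l) * sqrt xi).

Lemma ft2_le z : 0 < z < eta ->
  ft2 z <= Rabs Kc * (1 + 2 * C) * (D0 * Rpower z (l + 1/2) * Rpower (xi - z) (- (l + 1/2)) / sqrt (eta - z)).
Proof.
  intros Hz. pose proof (sg2_neg z Hz) as Hs. pose proof (one_m_sg2 z Hz) as H1.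
  pose proof (Y2_range z Hz) as HY. unfold ft2.
  set (s := sigma2 z xi eta) in *.
  set (y := s / (s - 1)) in *.
  assert (Hy1 : 1 - y = / (1 - s)) by (unfold y; field; lra).
  pose proof (hyp_bound _ _ _ C HC Hco y HY) as Hb. fold t2 in Hb.
  rewrite Hy1, sqrt_inv in Hb.
  replace ((1 + 2 * C) / / sqrt (1 - s)) with ((1 + 2 * C) * sqrt (1 - s)) in Hb
    by (field; apply Rgt_not_eq, sqrt_lt_R0; lra).
  set (P := Rpower (xi - eta) (1 + 2 * l) * z / (Rpower xi (l + 1) * Rpower (eta - z) (l + 1))) in *.
  set (R1 := Rpower (1 - s) (- (1 + l))) in *.
  set (Q := Rpower z (l - 1/2)) in *.
  rewrite Rabs_mult, (Rabs_right R1) by (apply Rle_ge, Rlt_le, Rpower_pos).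
  set (A := Rabs (PSeries t2 y)) in *.
  assert (HP : 0 < P) by (unfold P; pos).
  assert (HR : 0 < R1) by (unfold R1; pos).
  assert (HQ : 0 < Q) by (unfold Q; pos).
  assert (HA : 0 <= A) by apply Rabs_pos.
  assert (Heq : P * R1 * Q * sqrt (1 - s) =
      D0 * Rpower z (l + 1/2) * Rpower (xi - z) (- (l + 1/2)) / sqrt (eta - z)).
  { apply ln_inv. pos. unfold D0; pos.
    unfold P, R1, Q, D0. rewrite H1. lnx. field. }
  rewrite <- Heq. clearbody A P R1 Q.
  apply Rle_trans with (Rabs Kc * (P * R1 * Q * A)).
  { replace (Kc * P * (R1 * A) * Q) with (Kc * (P * R1 * Q * A)) by ring.
    assert (HX: 0 <= P*R1*Q*A) by (repeat apply Rmult_le_pos; lra).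
    apply Rmult_le_compat_r; [exact HX | apply Rle_abs]. }
  replace (Rabs Kc * (1 + 2 * C) * (P * R1 * Q * sqrt (1 - s))) with
    (Rabs Kc * ((P * R1 * Q) * ((1 + 2 * C) * sqrt (1 - s)))) by ring.
  apply Rmult_le_compat_l. apply Rabs_pos.
  apply Rmult_le_compat_l. repeat apply Rmult_le_pos; lra. exact Hb.
Qed.
End V2S.

Lemma V2_neg l : -1/2 <= l -> l < 0 -> exists A2, forall xi eta, 0 < eta -> eta < xi ->
  improper_int_le (fun z => V2 l z xi eta * Rpower z (l - 1/2)) 0 eta
    (A2 * Rpower (xi - eta) (l + 1/2) * Rpower (1 - eta / xi) (l + 1/2)).
Proof.
  intros Hl Hl0. destruct (coefV2 l Hl) as [C [HC Hco]].
  set (m := - l). assert (Hm : 0 < m) by (unfold m; lra).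
  set (e := l + 1/2). assert (He0 : 0 <= e) by (unfold e; lra).
  exists (Rabs (Kc l) * (1 + 2 * C) / m). intros xi eta He Hex c d Hc Hcd Hd.
  set (Kt := Rabs (Kc l) * (1 + 2 * C) * D0 l xi eta).
  assert (HD0 : 0 < D0 l xi eta) by (unfold D0; pos).
  assert (HKt : 0 <= Kt).
  { unfold Kt. apply Rmult_le_pos; [apply Rmult_le_pos|]; try lra. apply Rabs_pos. }
  set (Ke := Kt * Rpower eta e).
  assert (HKe : 0 <= Ke) by (unfold Ke; pose proof (Rpower_pos eta e); nra).
  apply (int_bound _ (ft2 l xi eta) (fun z => Ke * Rpower (eta - z) m / (eta - z))
           (fun z => - (Ke / m) * Rpower (eta - z) m)); auto.
  - intros x Hx. apply (f_eq2 l xi eta He Hex C HC Hco); lra.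
  - intros x Hx. apply (ft2_cont l xi eta He Hex C HC Hco); lra.
  - intros x Hx. apply dcont. unfold Rpower. auto_derive. side2.
  - intros x Hx. unfold Rpower. auto_derive. lra. replace (eta + - x) with (eta - x) by ring. field. lra.
  - intros x Hx. eapply Rle_trans. apply (ft2_le l xi eta He Hex C HC Hco); lra.
    fold Kt. unfold Ke.
    assert (Hx1 : 0 < x) by lra. assert (Hx2 : 0 < eta - x) by lra.
    assert (H1 : Rpower x e <= Rpower eta e) by (apply Rpower_le_base; lra).
    assert (H2 : Rpower (xi - x) (- e) <= Rpower (eta - x) (- e)) by (apply Rpower_le_base_neg; lra).
    assert (H3 : Rpower eta e * Rpower (eta - x) (- e) / sqrt (eta - x) = Rpower eta e * Rpower (eta - x) m / (eta - x)).
    { apply ln_inv; pos. lnx. unfold m, e. field. }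
    set (K := Rabs (Kc l) * (1 + 2 * C)).
    assert (HK : 0 <= K * D0 l xi eta) by (unfold K; apply Rmult_le_pos; [apply Rmult_le_pos; [apply Rabs_pos|lra]|lra]).
    replace (K * (D0 l xi eta * Rpower x (l + 1 / 2) * Rpower (xi - x) (- (l + 1 / 2)) / sqrt (eta - x)))
      with ((K * D0 l xi eta) * (Rpower x e * Rpower (xi - x) (- e) / sqrt (eta - x))) by (unfold e; field; apply Rgt_not_eq, sqrt_lt_R0; lra).
    replace (Kt * Rpower eta e * Rpower (eta - x) m / (eta - x))
      with ((K * D0 l xi eta) * (Rpower eta e * Rpower (eta - x) m / (eta - x))) by (unfold Kt, K; field; lra).
    apply Rmult_le_compat_l. exact HK.
    rewrite <- H3.
    assert (0 < / sqrt (eta - x)) by pos.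
    unfold Rdiv.
    pose proof (Rpower_pos x e). pose proof (Rpower_pos (xi - x) (- e)).
    apply Rmult_le_compat_r. lra.
    apply Rmult_le_compat; lra.
  -
    assert (Hc1 : Rpower (eta - c) m <= Rpower eta m) by (apply Rpower_le_base; lra).
    pose proof (Rpower_pos (eta - d) m).
    apply Rle_trans with (Ke / m * Rpower eta m).
    { assert (0 <= Ke / m) by (unfold Rdiv; apply Rmult_le_pos; [lra| apply Rlt_le, Rinv_0_lt_compat; lra]).
      nra. }
    unfold Ke, Kt.
    assert (Hpure : D0 l xi eta * Rpower eta e * Rpower eta m <=
                    Rpower (xi - eta) (l + 1/2) * Rpower (1 - eta / xi) (l + 1/2)).
    { apply le_ln. pos. pos. replace (1 - eta / xi) with ((xi - eta) / xi) by (field; lra).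
      unfold D0. lnx. unfold e, m.
      assert (ln eta <= ln xi) by (apply ln_le'; lra).
      nra. }
    set (K := Rabs (Kc l) * (1 + 2 * C)).
    assert (HK : 0 <= K) by (unfold K; apply Rmult_le_pos; [apply Rabs_pos|lra]).
    unfold e in *.
    replace (K * D0 l xi eta * Rpower eta (l + 1/2) / m * Rpower eta m) with
      (K / m * (D0 l xi eta * Rpower eta (l + 1/2) * Rpower eta m)) by (field; lra).
    replace (K / m * Rpower (xi - eta) (l + 1 / 2) * Rpower (1 - eta / xi) (l + 1 / 2)) with
      (K / m * (Rpower (xi - eta) (l + 1 / 2) * Rpower (1 - eta / xi) (l + 1 / 2))) by ring.
    apply Rmult_le_compat_l. unfold Rdiv; apply Rmult_le_pos; [lra| apply Rlt_le, Rinv_0_lt_compat; lra].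
    exact Hpure.
Qed.

Lemma V2_pos l : 0 < l -> exists A2, forall xi eta, 0 < eta -> eta < xi ->
  improper_int_le (fun z => V2 l z xi eta * Rpower z (l - 1/2)) 0 eta
    (A2 * Rpower (xi - eta) l * (sqrt xi - sqrt eta)).
Proof.
  intros Hl0. assert (Hl : -1/2 <= l) by lra.
  destruct (coefV2 l Hl) as [C [HC Hco]].
  set (e := l + 1/2). assert (He0 : 0 < e) by (unfold e; lra).
  set (k := (1 + 2 * l) / l).
  assert (Hk : 0 < k) by (unfold k; pos).
  set (K := Rabs (Kc l) * (1 + 2 * C)).
  assert (HK : 0 <= K) by (unfold K; apply Rmult_le_pos; [apply Rabs_pos|lra]).
  exists (2 * K * (k + 2)). intros xi eta He Hex c d Hc Hcd Hd.
  assert (HD0 : 0 < D0 l xi eta) by (unfold D0; pos).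
  set (Ke := K * D0 l xi eta * Rpower eta e).
  assert (HKe : 0 <= Ke) by (unfold Ke; pose proof (Rpower_pos eta e); apply Rmult_le_pos; [apply Rmult_le_pos|]; lra).
  apply (int_bound _ (ft2 l xi eta)
     (fun z => Ke * (Rpower (xi - z) (- e) / sqrt (eta - z)
                     - 2 * e * sqrt (eta - z) * Rpower (xi - z) (- e) / (xi - z)
                     + (1 + 2 * l) * Rpower (xi - z) (- l) / (xi - z)))
     (fun z => Ke * (- 2 * sqrt (eta - z) * Rpower (xi - z) (- e) + k * Rpower (xi - z) (- l)))); auto.
  - intros x Hx. apply (f_eq2 l xi eta He Hex C HC Hco); lra.
  - intros x Hx. apply (ft2_cont l xi eta He Hex C HC Hco); lra.
  - intros x Hx. apply dcont. unfold Rpower. auto_derive. side2.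
  - intros x Hx. unfold Rpower. auto_derive. repeat split; lra.
    replace (eta + - x) with (eta - x) by ring. replace (xi + - x) with (xi - x) by ring.
    unfold k. field. split; [lra|]. split; [|lra]. apply Rgt_not_eq, sqrt_lt_R0; lra.
  - intros x Hx. eapply Rle_trans. apply (ft2_le l xi eta He Hex C HC Hco); lra.
    fold K. fold e.
    assert (Hx1 : 0 < x) by lra. assert (Hx2 : 0 < eta - x) by lra. assert (Hx3 : 0 < xi - x) by lra.
    assert (H1 : Rpower x e <= Rpower eta e) by (apply Rpower_le_base; lra).
    assert (Hs1 : 0 < sqrt (eta - x)) by pos. assert (Hs2 : 0 < sqrt (xi - x)) by pos.
    assert (Hs12 : sqrt (eta - x) <= sqrt (xi - x)) by (apply sqrt_le_1_alt; lra).
    assert (HRe : Rpower (xi - x) (- e) = Rpower (xi - x) (- l) / sqrt (xi - x)).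
    { unfold e. replace (- (l + 1/2)) with (- l - 1/2) by ring. apply Rpower_minus_half; lra. }
    pose proof (Rpower_pos (xi - x) (- l)) as HRl.
    assert (Hextra : 0 <= - 2 * e * sqrt (eta - x) * Rpower (xi - x) (- e) / (xi - x)
                     + (1 + 2 * l) * Rpower (xi - x) (- l) / (xi - x)).
    { rewrite HRe. unfold e.
      replace (- 2 * (l + 1 / 2) * sqrt (eta - x) * (Rpower (xi - x) (- l) / sqrt (xi - x)) / (xi - x) +
               (1 + 2 * l) * Rpower (xi - x) (- l) / (xi - x))
        with ((1 + 2 * l) * Rpower (xi - x) (- l) / (xi - x) / sqrt (xi - x) * (sqrt (xi - x) - sqrt (eta - x)))
        by (field; lra).
      apply Rmult_le_pos; [|lra]. apply Rlt_le. pos. }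
    set (G := Rpower (xi - x) (- e) / sqrt (eta - x)).
    assert (HG : 0 <= G) by (unfold G; apply Rlt_le; pos).
    replace (K * (D0 l xi eta * Rpower x e * Rpower (xi - x) (- e) / sqrt (eta - x)))
      with ((K * D0 l xi eta) * Rpower x e * G) by (unfold G; field; lra).
    apply Rle_trans with (Ke * G).
    { unfold Ke. apply Rmult_le_compat_r; auto. apply Rmult_le_compat_l; auto.
      apply Rmult_le_pos; lra. }
    apply Rmult_le_compat_l; auto. fold G.
    lra.
  - cbv beta.
    assert (Hsd : 0 <= sqrt (eta - d) * Rpower (xi - d) (- e)).
    { apply Rmult_le_pos. apply sqrt_pos. apply Rlt_le, Rpower_pos. }
    assert (a2 : Rpower (xi - d) (- l) <= Rpower (xi - eta) (- l)) by (apply Rpower_le_base_neg; lra).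
    assert (a4 : 0 < Rpower (xi - c) (- l)) by apply Rpower_pos.
    assert (a5 : Rpower (xi - c) (- l) <= Rpower (xi - eta) (- l)) by (apply Rpower_le_base_neg; lra).
    assert (a3 : sqrt (eta - c) * Rpower (xi - c) (- e) <= Rpower (xi - eta) (- l)).
    { assert (HRe : Rpower (xi - c) (- e) = Rpower (xi - c) (- l) / sqrt (xi - c)).
      { unfold e. replace (- (l + 1/2)) with (- l - 1/2) by ring. apply Rpower_minus_half; lra. }
      rewrite HRe. assert (0 < sqrt (xi - c)) by pos.
      assert (sqrt (eta - c) <= sqrt (xi - c)) by (apply sqrt_le_1_alt; lra).
      pose proof (sqrt_pos (eta - c)).
      apply Rle_trans with (Rpower (xi - c) (- l)); [|lra].
      replace (sqrt (eta - c) * (Rpower (xi - c) (- l) / sqrt (xi - c))) with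
        (Rpower (xi - c) (- l) * (sqrt (eta - c) / sqrt (xi - c))) by (field; lra).
      rewrite <- (Rmult_1_r (Rpower (xi - c) (- l))) at 2.
      apply Rmult_le_compat_l; [lra|].
      apply Rmult_le_reg_r with (sqrt (xi - c)); [lra|].
      replace (sqrt (eta - c) / sqrt (xi - c) * sqrt (xi - c)) with (sqrt (eta - c)) by (field; lra). lra. }
    set (Rl := Rpower (xi - eta) (- l)) in *.
    apply Rle_trans with (Ke * ((k + 2) * Rl)).
    { assert (Hb : - 2 * sqrt (eta - d) * Rpower (xi - d) (- e) + k * Rpower (xi - d) (- l) -
                  (- 2 * sqrt (eta - c) * Rpower (xi - c) (- e) + k * Rpower (xi - c) (- l)) <= (k + 2) * Rl).
      { assert (k * Rpower (xi - d) (- l) <= k * Rl) by (apply Rmult_le_compat_l; lra).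
        assert (0 <= k * Rpower (xi - c) (- l)) by (apply Rmult_le_pos; lra).
        lra. }
      replace (Ke * (- 2 * sqrt (eta - d) * Rpower (xi - d) (- e) + k * Rpower (xi - d) (- l)) -
               Ke * (- 2 * sqrt (eta - c) * Rpower (xi - c) (- e) + k * Rpower (xi - c) (- l)))
        with (Ke * (- 2 * sqrt (eta - d) * Rpower (xi - d) (- e) + k * Rpower (xi - d) (- l) -
                  (- 2 * sqrt (eta - c) * Rpower (xi - c) (- e) + k * Rpower (xi - c) (- l)))) by ring.
      apply Rmult_le_compat_l; auto. }
    assert (Hpure : D0 l xi eta * Rpower eta e * Rl = Rpower (xi - eta) l * (xi - eta) / sqrt xi).
    { apply ln_inv. unfold D0, Rl; pos. pos. unfold D0, Rl, e. lnx. field. }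
    assert (Hxi : 0 < sqrt xi) by pos. assert (Het : 0 < sqrt eta) by pos.
    assert (Hlt : sqrt eta < sqrt xi) by (apply sqrt_lt_1_alt; lra).
    assert (Hxx : sqrt xi * sqrt xi = xi) by (apply sqrt_sqrt; lra).
    assert (Hee : sqrt eta * sqrt eta = eta) by (apply sqrt_sqrt; lra).
    assert (Hq : (xi - eta) / sqrt xi <= 2 * (sqrt xi - sqrt eta)).
    { apply Rmult_le_reg_r with (sqrt xi); [lra|].
      replace ((xi - eta) / sqrt xi * sqrt xi) with (xi - eta) by (field; lra). nra. }
    pose proof (Rpower_pos (xi - eta) l) as HRp.
    replace (Ke * ((k + 2) * Rl)) with (K * (k + 2) * (D0 l xi eta * Rpower eta e * Rl)) by (unfold Ke; ring).
    rewrite Hpure.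
    replace (2 * K * (k + 2) * Rpower (xi - eta) l * (sqrt xi - sqrt eta)) with
      (K * (k + 2) * (Rpower (xi - eta) l * (2 * (sqrt xi - sqrt eta)))) by ring.
    apply Rmult_le_compat_l. apply Rmult_le_pos; lra.
    replace (Rpower (xi - eta) l * (xi - eta) / sqrt xi) with (Rpower (xi - eta) l * ((xi - eta) / sqrt xi)) by (field; lra).
    apply Rmult_le_compat_l; lra.
Qed.


Theorem lemmaA2 :
  forall l : R, -1/2 <= l ->
  exists A1 A2 : R,
    (forall xi eta : R, 0 < eta -> eta < xi ->
       improper_int_le (fun z => V1 l z xi eta * Rpower z (l - 1/2)) eta xi
         (A1 * Rpower (xi - eta) l * (sqrt xi - sqrt eta))) /\
    (0 < l -> forall xi eta : R, 0 < eta -> eta < xi ->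
       improper_int_le (fun z => V2 l z xi eta * Rpower z (l - 1/2)) 0 eta
         (A2 * Rpower (xi - eta) l * (sqrt xi - sqrt eta))) /\
    (l < 0 -> forall xi eta : R, 0 < eta -> eta < xi ->
       improper_int_le (fun z => V2 l z xi eta * Rpower z (l - 1/2)) 0 eta
         (A2 * Rpower (xi - eta) (l + 1/2) * Rpower (1 - eta / xi) (l + 1/2))).
Proof.
  intros l Hl. destruct (V1_part l Hl) as [A1 HA1].
  destruct (Rlt_or_le 0 l) as [Hp|Hnp].
  - destruct (V2_pos l Hp) as [A2 HA2]. exists A1, A2.
    split; [exact HA1|]. split; [intros _; exact HA2|]. intros; lra.
  - destruct (Rlt_or_le l 0) as [Hn|Hnn].
    + destruct (V2_neg l Hl Hn) as [A2 HA2]. exists A1, A2.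
      split; [exact HA1|]. split; [intros; lra|]. intros _; exact HA2.
    + exists A1, 0. split; [exact HA1|]. split; intros; lra.
Qed.
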